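(* Let $G_1=(V_1,E_1)$ and $G_2=(V_2,E_2)$ be finite simple directed graphs with real costs $c(i\to k)$, $c(ij\to kl)$, $c(i\to\epsilon)$, $c(ij\to\epsilon)$, $c(\epsilon\to k)$, $c(\epsilon\to kl)$ for $i\in V_1$, $k\in V_2$, $ij\in E_1$, $kl\in E_2$. Define program (F1): minimize $$\sum_{i\in V_1}\sum_{k\in V_2}c(i\to k)x_{i,k}+\sum_{ij\in E_1}\sum_{kl\in E_2}c(ij\to kl)y_{ij,kl}+\sum_{i\in V_1}c(i\to\epsilon)u_i+\sum_{k\in V_2}c(\epsilon\to k)v_k+\sum_{ij\in E_1}c(ij\to\epsilon)e_{ij}+\sum_{kl\in E_2}c(\epsilon\to kl)f_{kl}$$ over binary $\mathbf{x},\mathbf{y},\mathbf{u},\mathbf{v},\mathbf{e},\mathbf{f}$ subject to: $u_i+\sum_{k\in V_2}x_{i,k}=1$ ($\forall i\in V_1$); $v_k+\sum_{i\in V_1}x_{i,k}=1$ ($\forall k\in V_2$); $e_{ij}+\sum_{kl\in E_2}y_{ij,kl}=1$ ($\forall ij\in E_1$); $f_{kl}+\sum_{ij\in E_1}y_{ij,kl}=1$ ($\forall kl\in E_2$); $y_{ij,kl}\le x_{i,k}$ and $y_{ij,kl}\le x_{j,l}$ ($\forall (ij,kl)\in E_1\times E_2$). Define program (F2): minimize $$\sum_{i\in V_1}\sum_{k\in V_2}\bigl(c(i\to k)-c(i\to\epsilon)-c(\epsilon\to k)\bigr)x_{i,k}+\sum_{ij\in E_1}\sum_{kl\in E_2}\bigl(c(ij\to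 kl)-c(ij\to\epsilon)-c(\epsilon\to kl)\bigr)y_{ij,kl}+C,$$ with $C=\sum_{i\in V_1}c(i\to\epsilon)+\sum_{k\in V_2}c(\epsilon\to k)+\sum_{ij\in E_1}c(ij\to\epsilon)+\sum_{kl\in E_2}c(\epsilon\to kl)$, over binary $\mathbf{x},\mathbf{y}$ subject to: $\sum_{k\in V_2}x_{i,k}\le1$ ($\forall i\in V_1$); $\sum_{i\in V_1}x_{i,k}\le 1$ ($\forall k\in V_2$); $\sum_{l\in V_2:\,kl\in E_2}y_{ij,kl}\le x_{i,k}$ ($\forall k\in V_2,\ \forall ij\in E_1$); $\sum_{k\in V_2:\,kl\in E_2}y_{ij,kl}\le x_{j,l}$ ($\forall l\in V_2,\ \forall ij\in E_1$). Then the map $(\mathbf{x},\mathbf{y},\mathbf{u},\mathbf{v},\mathbf{e},\mathbf{f})\mapsto(\mathbf{x},\mathbf{y})$ is a bijection from the feasible set of (F1) onto the feasible set of (F2), it preserves the objective value, and consequently (F1) and (F2) have the same optimal value.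
   Context: All variables $x_{i,k},y_{ij,kl},u_i,v_k,e_{ij},f_{kl}$ take values in $\{0,1\}$. Edges of a simple directed graph are ordered pairs of distinct vertices, written $ij$ for $(i,j)$. The optimal value of (F1) is the graph edit distance between $G_1$ and $G_2$ under the given costs. *)

(* Defs.v *)
From HB Require Import structures.
From mathcomp Require Import all_boot all_order all_algebra.
Set Implicit Arguments. Unset Strict Implicit. Unset Printing Implicit Defensive.
Import Order.TTheory GRing.Theory Num.Theory.

Notation edge E := {p | p \in (E : {set _})}.

Definition loopless (V : finType) (E : {set V * V}) : Prop :=
  forall i : V, (i, i) \notin E.

(* Binary variables are booleans (true = 1, false = 0); constraints are
   stated in nat via the bool >-> nat coercion. *)

Definition F1_feasible (V1 V2 : finType) (E1 : {set V1 * V1}) (E2 : {set V2 * V2})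
  (x : {ffun V1 * V2 -> bool}) (y : {ffun edge E1 * edge E2 -> bool})
  (u : {ffun V1 -> bool}) (v : {ffun V2 -> bool})
  (e : {ffun edge E1 -> bool}) (f : {ffun edge E2 -> bool}) : Prop :=
  [/\ (forall i : V1, u i + \sum_(k : V2) x (i, k) = 1)%N,
      (forall k : V2, v k + \sum_(i : V1) x (i, k) = 1)%N,
      (forall a : edge E1, e a + \sum_(b : edge E2) y (a, b) = 1)%N,
      (forall b : edge E2, f b + \sum_(a : edge E1) y (a, b) = 1)%N &
      (forall (a : edge E1) (b : edge E2),
          (y (a, b) <= x ((val a).1, (val b).1))%N /\
          (y (a, b) <= x ((val a).2, (val b).2))%N)].

Definition F1_obj (R : realFieldType) (V1 V2 : finType)
  (E1 : {set V1 * V1}) (E2 : {set V2 * V2})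
  (cV : V1 -> V2 -> R) (cE : edge E1 -> edge E2 -> R)
  (cVdel : V1 -> R) (cVins : V2 -> R)
  (cEdel : edge E1 -> R) (cEins : edge E2 -> R)
  (x : {ffun V1 * V2 -> bool}) (y : {ffun edge E1 * edge E2 -> bool})
  (u : {ffun V1 -> bool}) (v : {ffun V2 -> bool})
  (e : {ffun edge E1 -> bool}) (f : {ffun edge E2 -> bool}) : R :=
  (\sum_(i : V1) \sum_(k : V2) cV i k * (x (i, k))%:R
   + \sum_(a : edge E1) \sum_(b : edge E2) cE a b * (y (a, b))%:R
   + \sum_(i : V1) cVdel i * (u i)%:R
   + \sum_(k : V2) cVins k * (v k)%:R
   + \sum_(a : edge E1) cEdel a * (e a)%:R
   + \sum_(b : edge E2) cEins b * (f b)%:R)%R.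

Definition F2_feasible (V1 V2 : finType) (E1 : {set V1 * V1}) (E2 : {set V2 * V2})
  (x : {ffun V1 * V2 -> bool}) (y : {ffun edge E1 * edge E2 -> bool}) : Prop :=
  [/\ (forall i : V1, \sum_(k : V2) x (i, k) <= 1)%N,
      (forall k : V2, \sum_(i : V1) x (i, k) <= 1)%N,
      (forall (k : V2) (a : edge E1),
          \sum_(b : edge E2 | (val b).1 == k) y (a, b) <= x ((val a).1, k))%N &
      (forall (l : V2) (a : edge E1),
          \sum_(b : edge E2 | (val b).2 == l) y (a, b) <= x ((val a).2, l))%N].

Definition F2_obj (R : realFieldType) (V1 V2 : finType)
  (E1 : {set V1 * V1}) (E2 : {set V2 * V2})
  (cV : V1 -> V2 -> R) (cE : edge E1 -> edge E2 -> R)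
  (cVdel : V1 -> R) (cVins : V2 -> R)
  (cEdel : edge E1 -> R) (cEins : edge E2 -> R)
  (x : {ffun V1 * V2 -> bool}) (y : {ffun edge E1 * edge E2 -> bool}) : R :=
  (\sum_(i : V1) \sum_(k : V2) (cV i k - cVdel i - cVins k) * (x (i, k))%:R
   + \sum_(a : edge E1) \sum_(b : edge E2) (cE a b - cEdel a - cEins b) * (y (a, b))%:R
   + (\sum_(i : V1) cVdel i + \sum_(k : V2) cVins k
      + \sum_(a : edge E1) cEdel a + \sum_(b : edge E2) cEins b))%R.

Definition F1_optimal_value (R : realFieldType) (V1 V2 : finType)
  (E1 : {set V1 * V1}) (E2 : {set V2 * V2})
  (cV : V1 -> V2 -> R) (cE : edge E1 -> edge E2 -> R)
  (cVdel : V1 -> R) (cVins : V2 -> R)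
  (cEdel : edge E1 -> R) (cEins : edge E2 -> R) (r : R) : Prop :=
  (exists x y u v e f, F1_feasible x y u v e f /\
     F1_obj cV cE cVdel cVins cEdel cEins x y u v e f = r) /\
  (forall x y u v e f, F1_feasible x y u v e f ->
     (r <= F1_obj cV cE cVdel cVins cEdel cEins x y u v e f)%R).

Definition F2_optimal_value (R : realFieldType) (V1 V2 : finType)
  (E1 : {set V1 * V1}) (E2 : {set V2 * V2})
  (cV : V1 -> V2 -> R) (cE : edge E1 -> edge E2 -> R)
  (cVdel : V1 -> R) (cVins : V2 -> R)
  (cEdel : edge E1 -> R) (cEins : edge E2 -> R) (r : R) : Prop :=
  (exists x y, F2_feasible x y /\
     F2_obj cV cE cVdel cVins cEdel cEins x y = r) /\
  (forall x y, F2_feasible x y ->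
     (r <= F2_obj cV cE cVdel cVins cEdel cEins x y)%R).

(* Main.v *)
Require Import Defs.
From HB Require Import structures.
From mathcomp Require Import all_boot all_order all_algebra.
From mathcomp Require Import ring.
Import Order.TTheory GRing.Theory Num.Theory.
Set Implicit Arguments. Unset Strict Implicit.

Lemma two_le (I : finType) (F : I -> bool) i j :
  i != j -> F i -> F j -> (2 <= \sum_k F k)%N.
Proof.
move=> nij Fi Fj; rewrite (bigD1 i) //= (bigD1 j) /=; last by rewrite eq_sym nij.
by rewrite Fi Fj.
Qed.

Lemma le1_uniq (I : finType) (F : I -> bool) :
  (forall a b, F a -> F b -> a = b) -> (\sum_k F k <= 1)%N.
Proof.
move=> U; case: (pickP F) => [a Fa|none].
  rewrite (bigD1 a) //= big1 ?addn0 ?Fa // => b nb.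
  case Fb: (F b) => //; by rewrite (U _ _ Fb Fa) eqxx in nb.
by rewrite big1 // => k _; rewrite none.
Qed.

Lemma le1_uniq' (I : finType) (F : I -> bool) :
  (\sum_k F k <= 1)%N -> forall a b, F a -> F b -> a = b.
Proof.
move=> H a b Fa Fb; apply/eqP; apply/negPn/negP => nab.
by have := two_le nab Fa Fb; rewrite leqNgt ltnS H.
Qed.

Lemma term_le (I : finType) (P : pred I) (F : I -> nat) a :
  P a -> (F a <= \sum_(k | P k) F k)%N.
Proof. by move=> Pa; rewrite (bigD1 a) //= leq_addr. Qed.

Lemma bool_eq1 (b : bool) (s : nat) : (s <= 1)%N -> b = (s == 0%N) -> (b + s = 1)%N.
Proof. by move=> H ->; case: s H => [|[|]]. Qed.

Lemma bool_inj (b b' : bool) s : (b + s = 1)%N -> (b' + s = 1)%N -> b = b'.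
Proof.
move=> h h'; have E : (b : nat) = b' by apply: (@addIn s); rewrite h h'.
by move: E; case: (b) (b') => [] [].

Qed.

Section S.
Variables (V1 V2 : finType) (E1 : {set V1 * V1}) (E2 : {set V2 * V2}).

Lemma proj_ok (x : {ffun V1 * V2 -> bool}) (y : {ffun edge E1 * edge E2 -> bool})
     (u : {ffun V1 -> bool}) (v : {ffun V2 -> bool})
     (e : {ffun edge E1 -> bool}) (f : {ffun edge E2 -> bool}) :
  F1_feasible x y u v e f -> F2_feasible x y.
Proof.
case=> hu hv he hf hy; split.
- by move=> i; rewrite -(hu i) leq_addl.
- by move=> k; rewrite -(hv k) leq_addl.
- move=> k a; case X: (x _).
    apply: leq_trans (_ : \sum_b y (a, b) <= 1)%N; last by rewrite -(he a) leq_addl.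
    by rewrite [X in (_ <= X)%N](bigID (fun b : edge E2 => (val b).1 == k)) /= leq_addr.
  rewrite leqn0 sum_nat_eq0; apply/forallP => b; apply/implyP => /eqP hb.
  by have [+ _] := hy a b; rewrite hb X leqn0.
- move=> l a; case X: (x _).
    apply: leq_trans (_ : \sum_b y (a, b) <= 1)%N; last by rewrite -(he a) leq_addl.
    by rewrite [X in (_ <= X)%N](bigID (fun b : edge E2 => (val b).2 == l)) /= leq_addr.
  rewrite leqn0 sum_nat_eq0; apply/forallP => b; apply/implyP => /eqP hb.
  by have [_ +] := hy a b; rewrite hb X leqn0.
Qed.

Lemma onto_ok (x : {ffun V1 * V2 -> bool}) (y : {ffun edge E1 * edge E2 -> bool}) :
  F2_feasible x y -> exists u v e f, F1_feasible x y u v e f.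
Proof.
case=> h1 h2 h3 h4.
have hy : forall a b, (y (a, b) <= x ((val a).1, (val b).1))%N /\
                      (y (a, b) <= x ((val a).2, (val b).2))%N.
  move=> a b; split.
    apply: leq_trans (h3 _ a); exact: (term_le (fun b0 : edge E2 => y (a, b0))).
  apply: leq_trans (h4 _ a); exact: (term_le (fun b0 : edge E2 => y (a, b0))).
exists [ffun i => \sum_k x (i, k) == 0%N], [ffun k => \sum_i x (i, k) == 0%N],
  [ffun a => \sum_b y (a, b) == 0%N], [ffun b => \sum_a y (a, b) == 0%N].
split.
- by move=> i; rewrite ffunE; apply: bool_eq1.
- by move=> k; rewrite ffunE; apply: bool_eq1.
- move=> a; rewrite ffunE; apply: bool_eq1 => //.
  rewrite (partition_big (fun b : edge E2 => (val b).1) predT) //=.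
  apply: leq_trans (h1 (val a).1); apply: leq_sum => k _; exact: h3.
- move=> b; rewrite ffunE; apply: bool_eq1 => //.
  apply: (@le1_uniq _ (fun a : edge E1 => y (a, b))) => a a' ya ya'.
  have [xa1 xa2] := hy a b; have [xa1' xa2'] := hy a' b.
  rewrite ya !lt0b in xa1 xa2; rewrite ya' !lt0b in xa1' xa2'.
  have e1 := le1_uniq' (h2 (val b).1) xa1 xa1'.
  have e2 := le1_uniq' (h2 (val b).2) xa2 xa2'.
  apply: val_inj; case: (val a) e1 e2 => ? ?; case: (val a') => ? ? /= -> -> //.
- exact: hy.
Qed.

Lemma inj_ok (x : {ffun V1 * V2 -> bool}) (y : {ffun edge E1 * edge E2 -> bool})
     (u : {ffun V1 -> bool}) (v : {ffun V2 -> bool})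
     (e : {ffun edge E1 -> bool}) (f : {ffun edge E2 -> bool})
     (u' : {ffun V1 -> bool}) (v' : {ffun V2 -> bool})
     (e' : {ffun edge E1 -> bool}) (f' : {ffun edge E2 -> bool}) :
     F1_feasible x y u v e f -> F1_feasible x y u' v' e' f' ->
     [/\ u = u', v = v', e = e' & f = f'].
Proof.
case=> hu hv he hf _ [hu' hv' he' hf' _]; split; apply/ffunP => z.
- exact: bool_inj (hu z) (hu' z).
- exact: bool_inj (hv z) (hv' z).
- exact: bool_inj (he z) (he' z).
- exact: bool_inj (hf z) (hf' z).
Qed.

Local Open Scope ring_scope.
Lemma natr_comp (R : realFieldType) (b : bool) (s : nat) (T : finType) (F : T -> bool) :
  s = (\sum_t F t)%N -> (b + s = 1)%N -> (b%:R : R) = 1 - \sum_t (F t)%:R.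
Proof.
move=> -> h; have := congr1 (fun n : nat => (n%:R : R)) h.
rewrite /= natrD natr_sum => H.
by rewrite -[1 in RHS]/(1%:R) -{1}H addrK.
Qed.

Lemma obj_ok (R : realFieldType)
  (cV : V1 -> V2 -> R) (cE : edge E1 -> edge E2 -> R)
  (cVdel : V1 -> R) (cVins : V2 -> R)
  (cEdel : edge E1 -> R) (cEins : edge E2 -> R)
  (x : {ffun V1 * V2 -> bool}) (y : {ffun edge E1 * edge E2 -> bool})
     (u : {ffun V1 -> bool}) (v : {ffun V2 -> bool})
     (e : {ffun edge E1 -> bool}) (f : {ffun edge E2 -> bool}) :
  F1_feasible x y u v e f ->
     F2_obj cV cE cVdel cVins cEdel cEins x y
     = F1_obj cV cE cVdel cVins cEdel cEins x y u v e f.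
Proof.
case=> hu hv he hf _; rewrite /F1_obj /F2_obj.
have -> : \sum_i cVdel i * (u i)%:R =
   \sum_i cVdel i - \sum_i \sum_k cVdel i * (x (i, k))%:R :> R.
  rewrite -sumrB; apply: eq_bigr => i _.
  by rewrite (@natr_comp R _ _ _ (fun k => x (i, k)) erefl (hu i)) mulrBr mulr1 mulr_sumr.
have -> : \sum_k cVins k * (v k)%:R =
   \sum_k cVins k - \sum_i \sum_k cVins k * (x (i, k))%:R :> R.
  rewrite [in RHS]exchange_big /=.
  rewrite -sumrB; apply: eq_bigr => k _.
  by rewrite (@natr_comp R _ _ _ (fun i => x (i, k)) erefl (hv k)) mulrBr mulr1 mulr_sumr.
have -> : \sum_a cEdel a * (e a)%:R =
   \sum_a cEdel a - \sum_a \sum_b cEdel a * (y (a, b))%:R :> R.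
  rewrite -sumrB; apply: eq_bigr => a _.
  by rewrite (@natr_comp R _ _ _ (fun b => y (a, b)) erefl (he a)) mulrBr mulr1 mulr_sumr.
have -> : \sum_b cEins b * (f b)%:R =
   \sum_b cEins b - \sum_a \sum_b cEins b * (y (a, b))%:R :> R.
  rewrite [in RHS]exchange_big /=.
  rewrite -sumrB; apply: eq_bigr => b _.
  by rewrite (@natr_comp R _ _ _ (fun a => y (a, b)) erefl (hf b)) mulrBr mulr1 mulr_sumr.
have -> : \sum_i \sum_k (cV i k - cVdel i - cVins k) * (x (i, k))%:R =
  \sum_i \sum_k cV i k * (x (i, k))%:R - \sum_i \sum_k cVdel i * (x (i, k))%:R
  - \sum_i \sum_k cVins k * (x (i, k))%:R :> R.
  rewrite -!sumrB; apply: eq_bigr => i _; rewrite -!sumrB; apply: eq_bigr => k _.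
  by rewrite !mulrBl.
have -> : \sum_a \sum_b (cE a b - cEdel a - cEins b) * (y (a, b))%:R =
  \sum_a \sum_b cE a b * (y (a, b))%:R - \sum_a \sum_b cEdel a * (y (a, b))%:R
  - \sum_a \sum_b cEins b * (y (a, b))%:R :> R.
  rewrite -!sumrB; apply: eq_bigr => a _; rewrite -!sumrB; apply: eq_bigr => b _.
  by rewrite !mulrBl.
ring.
Qed.

End S.

Theorem mainTheorem4 (R : realFieldType) (V1 V2 : finType)
  (E1 : {set V1 * V1}) (E2 : {set V2 * V2})
  (G1simple : loopless E1) (G2simple : loopless E2)
  (cV : V1 -> V2 -> R) (cE : edge E1 -> edge E2 -> R)
  (cVdel : V1 -> R) (cVins : V2 -> R)
  (cEdel : edge E1 -> R) (cEins : edge E2 -> R) :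
  (* the projection maps feasible solutions of (F1) to feasible ones of (F2) *)
  (forall (x : {ffun V1 * V2 -> bool}) (y : {ffun edge E1 * edge E2 -> bool})
     (u : {ffun V1 -> bool}) (v : {ffun V2 -> bool})
     (e : {ffun edge E1 -> bool}) (f : {ffun edge E2 -> bool}), F1_feasible x y u v e f -> F2_feasible x y) /\
  (* it is injective on the feasible set of (F1) *)
  (forall (x : {ffun V1 * V2 -> bool}) (y : {ffun edge E1 * edge E2 -> bool})
     (u : {ffun V1 -> bool}) (v : {ffun V2 -> bool})
     (e : {ffun edge E1 -> bool}) (f : {ffun edge E2 -> bool})
     (u' : {ffun V1 -> bool}) (v' : {ffun V2 -> bool})
     (e' : {ffun edge E1 -> bool}) (f' : {ffun edge E2 -> bool}),
     F1_feasible x y u v e f -> F1_feasible x y u' v' e' f' ->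
     [/\ u = u', v = v', e = e' & f = f']) /\
  (* it is onto the feasible set of (F2) *)
  (forall (x : {ffun V1 * V2 -> bool}) (y : {ffun edge E1 * edge E2 -> bool}), F2_feasible x y -> exists u v e f, F1_feasible x y u v e f) /\
  (* it preserves the objective value *)
  (forall (x : {ffun V1 * V2 -> bool}) (y : {ffun edge E1 * edge E2 -> bool})
     (u : {ffun V1 -> bool}) (v : {ffun V2 -> bool})
     (e : {ffun edge E1 -> bool}) (f : {ffun edge E2 -> bool}), F1_feasible x y u v e f ->
     F2_obj cV cE cVdel cVins cEdel cEins x y
     = F1_obj cV cE cVdel cVins cEdel cEins x y u v e f) /\
  (* hence (F1) and (F2) have the same optimal value *)
  (forall r : R, F1_optimal_value cV cE cVdel cVins cEdel cEins r <->
                 F2_optimal_value cV cE cVdel cVins cEdel cEins r).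
Proof.
split; first exact: proj_ok.
split; first exact: inj_ok.
split; first exact: onto_ok.
split; first exact: obj_ok.
move=> r; split.
- case=> [[x [y [u [v [e [f [F O]]]]]]] L]; split.
    exists x, y; split; first exact: proj_ok F.
    by rewrite (obj_ok _ _ _ _ _ _ F).
  move=> x' y' F'; have [u' [v' [e' [f' F1']]]] := onto_ok F'.
  by rewrite (obj_ok _ _ _ _ _ _ F1'); apply: L.
- case=> [[x [y [F O]]] L]; split.
    have [u [v [e [f F1]]]] := onto_ok F.
    by exists x, y, u, v, e, f; split => //; rewrite -(obj_ok _ _ _ _ _ _ F1).
  move=> x1 y1 u1 v1 e1 f1 F1; rewrite -(obj_ok _ _ _ _ _ _ F1); apply: L.
  exact: proj_ok F1.
Qed.
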